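(* Let $H$ be a separable complex Hilbert space, let $\mathcal{U}$ be a unitary system on $H$, let $\psi,\eta\in\mathcal{W}(\mathcal{U})$, and let $V$ be the unique unitary operator in the local commutant $\mathcal{C}_\psi(\mathcal{U})$ with $V\psi=\eta$. Suppose that for some $0<\alpha<\frac{\pi}{2}$ the vector $\rho:=\cos\alpha\cdot\psi+i\sin\alpha\cdot\eta$ belongs to $\mathcal{W}(\mathcal{U})$. Then $V^2=I$.
   Context: A unitary system on $H$ is a collection $\mathcal{U}$ of unitary operators on $H$ containing the identity operator. A vector $\psi\in H$ is a complete wandering vector for $\mathcal{U}$ if $\{U\psi:U\in\mathcal{U}\}$ is an orthonormal set (distinct elements of $\mathcal{U}$ giving orthogonal vectors) whose closed linear span is $H$; $\mathcal{W}(\mathcal{U})$ denotes the set of such vectors. The local commutant of $\mathcal{U}$ at $\psi$ is $\mathcal{C}_\psi(\mathcal{U}):=\{A\in B(H): (AU-UA)\psi=0 \text{ for all } U\in\mathcal{U}\}$. For $\psi,\eta\in\mathcal{W}(\mathcal{U})$ there is exactly one unitary $V\in\mathcal{C}_\psi(\mathcal{U})$ with $V\psi=\eta$, namely the unitary with $V(U\psi)=U\eta$ for all $U\in\mathcal{U}$. *)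

(* Defs.v *)
From mathcomp Require Import all_boot all_order all_algebra.
From Stdlib Require Lists.List.
From mathcomp Require Import reals trigo.
From mathcomp Require Export complex.
Set Implicit Arguments.
Unset Strict Implicit.
Unset Printing Implicit Defensive.
Import Order.TTheory GRing.Theory Num.Theory.
Local Open Scope ring_scope.
Local Open Scope complex_scope.

Section Hilbert.
Variables (R : realType) (H : lmodType R[i]) (ip : H -> H -> R[i]).

Definition inner_product_axioms : Prop :=
  [/\ (forall (a : R[i]) (x y z : H), ip (a *: x + y) z = a * ip x z + ip y z),
      (forall x y : H, ip y x = (ip x y)^*),
      (forall x : H, 0 <= ip x x) &
      (forall x : H, ip x x = 0 -> x = 0)].

Definition hnorm (x : H) : R := Num.sqrt (complex.Re (ip x x)).

Definition hcomplete : Prop :=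
  forall u : nat -> H,
    (forall e : R, 0 < e -> exists N : nat, forall m n : nat,
        (N <= m)%N -> (N <= n)%N -> hnorm (u m - u n) < e) ->
    exists l : H, forall e : R, 0 < e -> exists N : nat, forall n : nat,
        (N <= n)%N -> hnorm (u n - l) < e.

Definition hseparable : Prop :=
  exists d : nat -> H, forall (x : H) (e : R), 0 < e ->
    exists n : nat, hnorm (x - d n) < e.

Definition separable_hilbert_space : Prop :=
  [/\ inner_product_axioms, hcomplete & hseparable].

Definition is_linear_op (A : H -> H) : Prop :=
  forall (a : R[i]) (x y : H), A (a *: x + y) = a *: A x + A y.

Definition bounded_op (A : H -> H) : Prop :=
  is_linear_op A /\ exists M : R, forall x : H, hnorm (A x) <= M * hnorm x.

Definition unitary_op (U : H -> H) : Prop :=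
  bounded_op U /\
  exists Ustar : H -> H,
    [/\ (forall x y : H, ip (U x) y = ip x (Ustar y)),
        (forall x : H, Ustar (U x) = x) &
        (forall x : H, U (Ustar x) = x)].

Definition unitary_system (UU : (H -> H) -> Prop) : Prop :=
  (forall U, UU U -> unitary_op U) /\ UU id.

(* psi is a complete wandering vector for UU: {U psi : U in UU} is an
   orthonormal set (distinct elements giving orthogonal vectors) whose
   closed linear span is H *)
Definition complete_wandering (UU : (H -> H) -> Prop) (psi : H) : Prop :=
  [/\ (forall U, UU U -> ip (U psi) (U psi) = 1),
      (forall U1 U2, UU U1 -> UU U2 -> U1 <> U2 -> ip (U1 psi) (U2 psi) = 0) &
      (forall (x : H) (e : R), 0 < e ->
         exists s : seq (R[i] * (H -> H)),
           (forall p, Stdlib.Lists.List.In p s -> UU p.2) /\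
           hnorm (x - \sum_(p <- s) p.1 *: p.2 psi) < e)].

Definition local_commutant (UU : (H -> H) -> Prop) (psi : H) (A : H -> H) : Prop :=
  bounded_op A /\ forall U, UU U -> A (U psi) - U (A psi) = 0.

End Hilbert.

(* Main.v *)
Require Import Defs.
From mathcomp Require Import all_boot all_order all_algebra.
From mathcomp Require Import reals trigo complex.
From mathcomp Require Import ring lra.
From Stdlib Require Import Classical.
Import Order.TTheory GRing.Theory Num.Theory.
Local Open Scope ring_scope.
Local Open Scope complex_scope.

Theorem proposition5 (R : realType) (H : lmodType R[i]) (ip : H -> H -> R[i])
  (HH : separable_hilbert_space ip)
  (UU : (H -> H) -> Prop) (hUU : unitary_system ip UU)
  (psi eta : H)
  (hpsi : complete_wandering ip UU psi) (heta : complete_wandering ip UU eta)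
  (V : H -> H) (hVu : unitary_op ip V) (hVc : local_commutant ip UU psi V)
  (hVpsi : V psi = eta)
  (alpha : R) (ha0 : 0 < alpha) (ha1 : alpha < pi / 2)
  (hrho : complete_wandering ip UU
            ((cos alpha)%:C *: psi + ('i * (sin alpha)%:C) *: eta)) :
  forall x : H, V (V x) = x.
Proof.
case: HH => [[ipl ipc ipp ipd] _ _].
have ip0l : forall z, ip 0 z = 0.
  move=> z; have h := ipl 1 0 0 z; rewrite scale1r addr0 mul1r in h.
  by apply/(addrI (ip 0 z)); rewrite addr0 -h.
have ipBl : forall x y z, ip (x - y) z = ip x z - ip y z.
  move=> x y z; have := ipl (-1) y x z; rewrite scaleN1r addrC => ->.
  by rewrite mulN1r addrC.
have ipZl : forall a x z, ip (a *: x) z = a * ip x z.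
  by move=> a x z; have := ipl a x 0 z; rewrite addr0 ip0l addr0.
have ipDl : forall x y z, ip (x + y) z = ip x z + ip y z.
  by move=> x y z; have := ipl 1 x y z; rewrite scale1r mul1r.
have ipZr : forall a x z, ip z (a *: x) = a^* * ip z x.
  by move=> a x z; rewrite (ipc (a *: x) z) ipZl rmorphM; congr (_ * _); exact: (esym (ipc x z)).
have ipDr : forall x y z, ip z (x + y) = ip z x + ip z y.
  by move=> x y z; rewrite (ipc (x + y) z) ipDl rmorphD; congr (_ + _); exact: esym (ipc _ _).
have ipBr : forall x y z, ip z (x - y) = ip z x - ip z y.
  by move=> x y z; rewrite (ipc (x - y) z) ipBl rmorphB; congr (_ - _); exact: esym (ipc _ _).
have ReD : forall a b : R[i], complex.Re (a + b) = complex.Re a + complex.Re b by move=> [a1 a2] [b1 b2]; reflexivity.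
have ge0Re : forall z : R[i], 0 <= z -> 0 <= complex.Re z.
  by move=> z; rewrite lecE => /andP[_].
have key : forall y, (forall W, UU W -> ip y (W psi) = 0) -> y = 0.
  move=> y hy; apply: ipd.
  have hs : forall s : seq (R[i] * (H -> H)),
      (forall p, List.In p s -> UU p.2) ->
      ip (\sum_(p <- s) p.1 *: p.2 psi) y = 0.
    elim=> [|p s IH] hin; first by rewrite big_nil ip0l.
    rewrite big_cons ipDl ipZl IH; last by move=> q hq; apply: hin; right.
    by rewrite ipc hy ?rmorph0 ?mulr0 ?addr0 //; apply: hin; left.
  have hre : forall e, 0 < e -> complex.Re (ip y y) < e ^+ 2.
    move=> e he; case: hpsi => _ _ /(_ y e he) [s [hin hn]].
    move: hn (hs s hin); set t := \sum_(p <- s) _ => hn ht.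
    have E : ip (y - t) (y - t) = ip y y + ip t t.
      rewrite ipBl !ipBr ht (ipc t y) ht rmorph0.
      by rewrite subr0 sub0r opprK.
    move: hn; rewrite /hnorm E ReD => hn.
    have h1 := ge0Re _ (ipp y); have h2 := ge0Re _ (ipp t).
    have h3 := sqr_sqrtr (addr_ge0 h1 h2).
    have h4 := sqrtr_ge0 (complex.Re (ip y y) + complex.Re (ip t t)).
    nra.
  have h1 := ge0Re _ (ipp y).
  have ha : complex.Re (ip y y) = 0.
    apply/eqP; rewrite eq_le h1 andbT; apply/negP => /negP; rewrite -ltNge => hp.
    have := hre _ hp; have := hre 1 ltr01; nra.
  have hi := ger0_Im (ipp y).
  by rewrite (complexE (ip y y)) ha hi mulr0 addr0.
have lin0 : forall A : H -> H, is_linear_op A -> A 0 = 0.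
  move=> A hA; have h := hA 1 0 0; rewrite scale1r addr0 scale1r in h.
  by apply/(addrI (A 0)); rewrite addr0 -h.
have linZ : forall (A : H -> H) a x, is_linear_op A -> A (a *: x) = a *: A x.
  by move=> A a x hA; have := hA a x 0; rewrite addr0 lin0 // addr0.
have hlinU : forall U, UU U -> is_linear_op U.
  by move=> U hU; case: (hUU.1 U hU) => [[]].
have wd : forall phi chi, complete_wandering ip UU phi -> complete_wandering ip UU chi ->
    forall U W, UU U -> UU W -> ip (U phi) (W phi) = ip (U chi) (W chi).
  move=> phi chi [h1 h2 _] [h1' h2' _] U W hU hW.
  case: (classic (U = W)) => [<-|ne]; first by rewrite h1 // h1'.
  by rewrite h2 // h2'.
set c := (cos alpha)%:C; set d := 'i * (sin alpha)%:C.
have hrhoU : forall A : H -> H, is_linear_op A -> A (c *: psi + d *: eta) = c *: A psi + d *: A eta.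
  by move=> A hA; rewrite hA linZ.
have cconj : c^* = c by apply: conjc_real.
have dconj : d^* = - d.
  rewrite /d rmorphM -mulNr; congr (_ * _); last exact: conjc_real.
  by apply/eqP; rewrite eq_complex /= oppr0 !eqxx.
have ipZc : forall x z, ip z (c *: x) = c * ip z x.
  by move=> x z; rewrite ipZr; congr (_ * _); exact: cconj.
have ipZd : forall x z, ip z (d *: x) = - d * ip z x.
  by move=> x z; rewrite ipZr; congr (_ * _); exact: dconj.
have cd1 : c * c - d * d = 1.
  rewrite /c /d; apply/eqP; rewrite eq_complex /=; apply/andP; split; apply/eqP;
  have := cos2Dsin2 alpha; rewrite !expr2 => h.
    by transitivity (cos alpha * cos alpha + sin alpha * sin alpha); [ring | exact h].
  by ring.
have sym : forall U W, UU U -> UU W -> ip (U eta) (W psi) = ip (U psi) (W eta).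
  move=> U W hU hW.
  have E := wd _ _ hrho hpsi U W hU hW.
  have E2 := wd _ _ hpsi heta U W hU hW.
  rewrite -/c -/d (hrhoU U (hlinU U hU)) (hrhoU W (hlinU W hW)) in E.
  rewrite !ipDl !ipZl !ipDr !ipZc !ipZd -E2 in E.
  move: E; set A := ip (U psi) (W psi); set P := ip (U psi) (W eta);
  set Q := ip (U eta) (W psi) => E.
  have F : c * d * (Q - P) = (c * (c * A + - d * P) + d * (c * Q + - d * A)) - A * (c * c - d * d) by ring.
  rewrite E cd1 mulr1 subrr in F.
  move/eqP: F; rewrite mulf_eq0 => /orP[|h]; first (rewrite mulf_eq0 => /orP[h|h]).
  - exfalso; move/eqP: h => h; have := congr1 (@complex.Re R) h; rewrite /c /= => h'.
    have : 0 < cos alpha by apply: cos_gt0_pihalf; apply/andP; split => //; lra.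
    by rewrite h' lt_irreflexive.
  - exfalso; move/eqP: h => h; have := congr1 (@complex.Im R) h; rewrite /d /= mul0r mul1r add0r => h'.
    have : 0 < sin alpha by apply: sin_gt0_pihalf; apply/andP; split.
    by rewrite h' lt_irreflexive.
  - by apply/eqP; rewrite -subr_eq0.
case: hVu => _ [Vs [hVs1 hVs2 hVs3]].
have hUeta : forall U, UU U -> V (U psi) = U eta.
  by move=> U hU; rewrite -hVpsi; apply/subr0_eq; exact: hVc.2 U hU.
have hVsW : forall W, UU W -> Vs (W psi) = W eta.
  move=> W hW; apply/subr0_eq/key => U hU.
  by rewrite ipBl (ipc (U psi) (Vs _)) (ipc (U psi) (W eta)) -(hVs1 (U psi) (W psi)) (hUeta U hU) (sym U W hU hW) subrr.
have hVsE : forall W, UU W -> Vs (W eta) = W psi.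
  by move=> W0 hW0; rewrite -hUeta // hVs2.
move=> x; apply/subr0_eq/key => W0 hW0.
by rewrite ipBl hVs1 hVsW // hVs1 hVsE // subrr.
Qed.
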